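(* Let $g\ge 4$ be an even integer. Let $H_g$ be the mixed graph with vertex set $\mathbb{Z}_g\times\{0,1,\dots,g/2-1\}$, edges $\{(i,j),(i+1,j)\}$ for all $i\in\mathbb{Z}_g$ and $0\le j\le g/2-1$, arcs $((i,j),(i,j+1))$ for all $i\in\mathbb{Z}_g$ and $0\le j\le g/2-2$, and arcs $((i,g/2-1),(i+g/2,0))$ for all $i\in\mathbb{Z}_g$ (first coordinates taken modulo $g$). (Equivalently, $H_g$ is the Cartesian product of the undirected cycle $C_g$ with the directed path on $g/2$ vertices, together with the arcs $((i,g/2-1),(i+g/2,0))$.) Then $H_g$ is a $[1,2;g]$-mixed graph of order $\frac{g^2}{2}$.
   Context: A mixed graph is a finite simple graph that may contain both edges and arcs. A $[z,r;g]$-mixed graph is a mixed graph in which every vertex is the tail of exactly $z$ arcs, the head of exactly $z$ arcs, and is incident with exactly $r$ edges, and whose girth is $g$. Walks traverse edges in either direction and arcs only in their direction; a cycle is a closed walk with no repeated vertices (other than start = end) and no repeated edge or arc; the girth is the length of a shortest cycle. *)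

(* Defs.v *)
From mathcomp Require Import all_boot.
Set Implicit Arguments. Unset Strict Implicit. Unset Printing Implicit Defensive.

Section MixedGraphs.
Variable T : finType.
(* A mixed graph on vertex set T: [e] is the (symmetric) edge relation,
   [a] the arc relation ([a u v] means an arc with tail u and head v). *)
Variables (e a : rel T).

Definition simple_mixed_graph : Prop :=
  [/\ forall u v, e u v = e v u,
      forall u, ~~ e u u,
      forall u, ~~ a u u &
      forall u v, a u v -> ~~ e u v].

Definition step (u v : T) (b : bool) : bool := if b then e u v else a u v.

Definition is_cycle (k : nat) (v : nat -> T) (b : nat -> bool) : Prop :=
  [/\ 0 < k,
      forall i j, i < k -> j < k -> v i = v j -> i = j,
      forall i, i < k -> step (v i) (v (i.+1 %% k)) (b i) &
      forall i j, i < k -> j < k -> i <> j -> b i = b j ->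
        if b i then [set v i; v (i.+1 %% k)] != [set v j; v (j.+1 %% k)]
        else (v i, v (i.+1 %% k)) != (v j, v (j.+1 %% k))].

Definition has_girth (g : nat) : Prop :=
  (exists v b, is_cycle g v b) /\
  (forall k v b, is_cycle k v b -> g <= k).

Definition zrg_mixed_graph (z r g : nat) : Prop :=
  [/\ simple_mixed_graph,
      forall u, #|[set v | a u v]| = z,
      forall u, #|[set v | a v u]| = z,
      forall u, #|[set v | e u v]| = r &
      has_girth g].
End MixedGraphs.

Unset Implicit Arguments.
Notation HV g := ('I_g * 'I_(g %/ 2))%type.

Definition Hedge (g : nat) : rel (HV g) := fun x y =>
  (val x.2 == val y.2) &&
  ((val y.1 == (val x.1 + 1) %% g) || (val x.1 == (val y.1 + 1) %% g)).

Definition Harc (g : nat) : rel (HV g) := fun x y =>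
  ((val x.1 == val y.1) && (val y.2 == (val x.2).+1))
  || [&& val x.2 == g %/ 2 - 1, val y.2 == 0 & val y.1 == (val x.1 + g %/ 2) %% g].

(* Main.v *)
Require Import Defs.
From mathcomp Require Import all_boot zify.

Lemma modS2 a g : 0 < g -> a < g + g -> a %% g = a - g * (g <= a).
Proof. move=> g0 ag. case: (leqP g a) => H /=.
  by rewrite muln1 -{1}(subnK H) modnDr modn_small // ltn_subLR.
  by rewrite muln0 subn0 modn_small.
Qed.

Lemma vlt {n} (x : 'I_n) : val x < n. Proof. exact: ltn_ord. Qed.

Definition vI {g} (x : HV g) : nat := val x.1.
Definition vJ {g} (x : HV g) : nat := val x.2.
Lemma vI_lt {g} (x : HV g) : vI x < g. Proof. exact: ltn_ord. Qed.
Lemma vJ_lt {g} (x : HV g) : vJ x < g %/ 2. Proof. exact: ltn_ord. Qed.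
Lemma vIJ_inj g (x y : HV g) : vI x = vI y -> vJ x = vJ y -> x = y.
Proof. case: x => [a b]; case: y => [c d] /= H1 H2.
by move: H1 H2; rewrite /vI /vJ /= => /val_inj -> /val_inj ->. Qed.
Lemma Hedge_E g x y : Hedge g x y = (vJ x == vJ y) &&
  ((vI y == (vI x + 1) %% g) || (vI x == (vI y + 1) %% g)).
Proof. by []. Qed.
Lemma Harc_E g x y : Harc g x y =
  ((vI x == vI y) && (vJ y == (vJ x).+1))
  || [&& vJ x == g %/ 2 - 1, vJ y == 0 & vI y == (vI x + g %/ 2) %% g].
Proof. by []. Qed.

Definition qf g c x := if c < x then x - c - 1 else x + g - c - 1.

Lemma qstep g c x y : c < g -> x < g -> y < g -> x != c -> y != c ->
  y = (x + 1) %% g -> qf g c y = (qf g c x).+1.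
Proof. move=> cg xg yg xc yc; rewrite modS2; try lia.
rewrite /qf; case: (ltnP c x); case: (ltnP c y); lia. Qed.

Lemma qinj g c x y : c < g -> x < g -> y < g -> x != c -> y != c ->
  qf g c x = qf g c y -> x = y.
Proof. move=> cg xg yg xc yc. rewrite /qf; case: (ltnP c x); case: (ltnP c y); lia. Qed.

Lemma maxex k (Q : nat -> nat) : 0 < k -> exists t, t < k /\ forall s, s < k -> Q s <= Q t.
Proof.
elim: k => // k IH _. case: k IH => [|k] IH.
  by exists 0; split => // s; rewrite ltnS leqn0 => /eqP ->.
have [t [tk Ht]] := IH erefl.
case: (leqP (Q t) (Q k.+1)) => H.
  exists k.+1; split => // s; rewrite ltnS leq_eqVlt => /orP [/eqP -> //|/Ht]; lia.
exists t; split; first lia. move=> s; rewrite ltnS leq_eqVlt => /orP [/eqP -> |/Ht]; lia.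
Qed.

Lemma pure_case g k v b : 4 <= g -> is_cycle (Hedge g) (Harc g) k v b ->
  (forall t, t < k -> b t) -> g <= k.
Proof.
move=> g4 [k0 inj st dist] allb.
rewrite leqNgt; apply/negP => kg.
have E : forall t, t < k -> vJ (v (t.+1 %% k)) = vJ (v t) /\
   ((vI (v (t.+1 %% k)) == (vI (v t) + 1) %% g) ||
    (vI (v t) == (vI (v (t.+1 %% k)) + 1) %% g)).
  move=> t tk; have := st t tk; rewrite /step allb // Hedge_E => /andP [/eqP -> ->]; done.
have k1 : k != 1.
  apply/eqP => k1; subst k; have [_] := E 0 erefl.
  have := vI_lt (v 0); rewrite modnn => H0; rewrite !modS2; lia.
have k2 : k != 2.
  apply/eqP => k2; subst k; have := dist 0 1 erefl erefl ltac:(lia).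
  by rewrite !allb //= setUC eqxx; move=> /(_ erefl).
have k3 : 3 <= k by lia.
have Jc : forall t, t < k -> vJ (v t) = vJ (v 0).
  elim => // t IH tk; have [H _] := E t ltac:(lia).
  by rewrite modn_small // in H; rewrite H IH //; lia.
have inj' : forall s t, s < k -> t < k -> vI (v s) = vI (v t) -> s = t.
  move=> s t sk tk H; apply: inj => //; apply: vIJ_inj => //.
  by rewrite Jc // Jc.
pose f : 'I_k -> 'I_g := fun t => (v t).1.
have finj : injective f by move=> s t /(congr1 val) /inj' H; apply: val_inj; apply: H.
have : ~~ ([set: 'I_g] \subset codom f).
  apply/negP => /subset_leq_card; rewrite cardsT card_ord card_codom // card_ord; lia.
case/subsetPn => c _ cnot.
have Ic : forall t, t < k -> vI (v t) != val c.
  move=> t tk; apply/negP => /eqP H; move: cnot; rewrite -[c](val_inj H).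
  by rewrite -/(f (Ordinal tk)) codom_f.
pose Q t := qf g c (vI (v t)).
have [t0 [t0k Hmax]] := maxex k Q k0.
have Qs : forall t, t < k -> Q (t.+1 %% k) = (Q t).+1 \/ Q t = (Q (t.+1 %% k)).+1.
  move=> t tk; have [_ /orP [/eqP H|/eqP H]] := E t tk; [left|right];
   (apply: qstep => //; (try apply: Ic); (try apply: ltn_pmod); (try apply: vI_lt); by []).
have n0k : t0.+1 %% k < k by apply: ltn_pmod.
have Hn : Q t0 = (Q (t0.+1 %% k)).+1.
  case: (Qs t0 t0k) => // H; have := Hmax _ n0k; lia.
pose p := if t0 == 0 then k.-1 else t0.-1.
have pk : p < k by rewrite /p; case: ifP; lia.
have np : p.+1 %% k = t0.
  rewrite /p; case: ifP => /eqP H.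
    by rewrite prednK // modnn H.
  by rewrite prednK ?modn_small //; lia.
have Hp : Q t0 = (Q p).+1.
  case: (Qs p pk); rewrite np // => H; have := Hmax _ pk; lia.
have : vI (v p) = vI (v (t0.+1 %% k)).
  apply: (qinj g c); [exact: ltn_ord|exact: vI_lt|exact: vI_lt|exact: Ic|apply: Ic; exact: ltn_pmod|]. change (Q p = Q (t0.+1 %% k)); lia.
move/inj' => /(_ pk n0k). rewrite /p modS2; try lia. case: ifP; lia.
Qed.

Lemma sum_rot k (F : nat -> nat) : 0 < k ->
  \sum_(t < k) F (t.+1 %% k) = \sum_(t < k) F t.
Proof.
case: k => // k _. rewrite big_ord_recr big_ord_recl /= modnn addnC.
congr (_ + _); apply: eq_bigr => i _; congr F.
by rewrite /= modn_small // ltnS.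
Qed.

Lemma gh g : ~~ odd g -> g = g %/ 2 + g %/ 2.
Proof. move=> ev; have E := odd_double_half g; rewrite (negbTE ev) -divn2 in E. lia. Qed.

Lemma step_facts g (x y : HV g) (bb : bool) : 4 <= g -> ~~ odd g ->
  step (Hedge g) (Harc g) x y bb ->
  [/\ vJ y + (g %/ 2 - 1) * (~~ bb && (vJ y != (vJ x).+1)) = vJ x + (~~ bb && (vJ y == (vJ x).+1)),
      (vI y + (bb && (vI y != (vI x + 1) %% g))) %% g =
        (vI x + (bb && (vI y == (vI x + 1) %% g)) + g %/ 2 * (~~ bb && (vJ y != (vJ x).+1))) %% g &
      (bb && (vI y == (vI x + 1) %% g)) + (bb && (vI y != (vI x + 1) %% g)) +
      (~~ bb && (vJ y == (vJ x).+1)) + (~~ bb && (vJ y != (vJ x).+1)) = 1].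
Proof.
move=> g4 gev; have G2 := gh _ gev.
have := vI_lt x; have := vI_lt y; have := vJ_lt x; have := vJ_lt y.
rewrite /step; case: bb => /= h1 h2 h3 h4.
  rewrite Hedge_E => H. rewrite !modS2 in H *; try lia; split; lia.
rewrite Harc_E => H. rewrite !modS2 in H *; try lia; split; lia.
Qed.

Lemma girth_lb g k v b : 4 <= g -> ~~ odd g -> is_cycle (Hedge g) (Harc g) k v b -> g <= k.
Proof.
move=> g4 gev C; have [k0 inj st dist] := C.
have G2 := gh _ gev.
pose pl t := b t && (vI (v (t.+1 %% k)) == (vI (v t) + 1) %% g).
pose mi t := b t && (vI (v (t.+1 %% k)) != (vI (v t) + 1) %% g).
pose a1 t := ~~ b t && (vJ (v (t.+1 %% k)) == (vJ (v t)).+1).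
pose a2 t := ~~ b t && (vJ (v (t.+1 %% k)) != (vJ (v t)).+1).
have S : forall t, t < k ->
  [/\ vJ (v (t.+1 %% k)) + (g %/ 2 - 1) * a2 t = vJ (v t) + a1 t,
      (vI (v (t.+1 %% k)) + mi t) %% g = (vI (v t) + pl t + g %/ 2 * a2 t) %% g &
      pl t + mi t + a1 t + a2 t = 1].
  by move=> t tk; apply: step_facts => //; apply: st.
have SJ : (g %/ 2 - 1) * \sum_(t < k) a2 t = \sum_(t < k) a1 t.
  have : \sum_(t < k) (vJ (v (t.+1 %% k)) + (g %/ 2 - 1) * a2 t) = \sum_(t < k) (vJ (v t) + a1 t).
    by apply: eq_bigr => t _; have [-> _ _] := S t (ltn_ord t).
  rewrite !big_split /= -big_distrr /= (sum_rot _ (fun t => vJ (v t))) //.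
  by move/eqP; rewrite eqn_add2l => /eqP.
have SI : (\sum_(t < k) mi t) %% g = (\sum_(t < k) pl t + g %/ 2 * \sum_(t < k) a2 t) %% g.
  have : (\sum_(t < k) (vI (v (t.+1 %% k)) + mi t)) %% g =
         (\sum_(t < k) (vI (v t) + pl t + g %/ 2 * a2 t)) %% g.
    rewrite -modn_summ -[in RHS]modn_summ; congr (_ %% _); apply: eq_bigr => t _.
    by have [_ -> _] := S t (ltn_ord t).
  rewrite !big_split /= -big_distrr /= (sum_rot _ (fun t => vI (v t))) // -addnA.
  by move/eqP; rewrite eqn_modDl => /eqP.
have SP : \sum_(t < k) pl t + \sum_(t < k) mi t + \sum_(t < k) a1 t + \sum_(t < k) a2 t = k.
  rewrite -!big_split /=. rewrite -[RHS]card_ord -sum1_card.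
  by apply: eq_bigr => t _; have [_ _ ->] := S t (ltn_ord t).
have [A20|A2pos] := eqVneq (\sum_(t < k) a2 t) 0.
  apply: pure_case C _ => //. move=> t tk.
  have : \sum_(t < k) (a1 t + a2 t) == 0 by rewrite big_split /= -SJ A20 muln0.
  rewrite sum_nat_eq0 => /forallP /(_ (Ordinal tk)) /=.
  by rewrite /a1 /a2; case: (b t) => //=; case: (vJ _ == _).
move: SI SJ SP A2pos.
set P := \sum_(t < k) pl t; set M := \sum_(t < k) mi t.
set A1 := \sum_(t < k) a1 t; set A2 := \sum_(t < k) a2 t => SI SJ SP A2pos.
rewrite leqNgt; apply/negP => kg.
have A21 : A2 = 1 by nia.
rewrite A21 muln1 !modn_small in SI; lia.
Qed.

Definition mkV {g} {i j : nat} (hi : i < g) (hj : j < g %/ 2) : HV g := (Ordinal hi, Ordinal hj).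

Lemma vI_mkV g i j (hi : i < g) (hj : j < g %/ 2) : vI (mkV hi hj) = i. Proof. by []. Qed.
Lemma vJ_mkV g i j (hi : i < g) (hj : j < g %/ 2) : vJ (mkV hi hj) = j. Proof. by []. Qed.

Lemma eqV_E g (x y : HV g) : (x == y) = (vI x == vI y) && (vJ x == vJ y).
Proof. by case: x y => [a b] [c d]. Qed.

Theorem lemma6 (g : nat) (hg : 4 <= g) (hev : ~~ odd g) :
  zrg_mixed_graph (Hedge g) (Harc g) 1 2 g /\ #|{: HV g}| = g ^ 2 %/ 2.
Proof.
have G2 := gh _ hev.
have g0 : 0 < g by lia.
have h0 : 0 < g %/ 2 by lia.
have h1 : g %/ 2 - 1 < g %/ 2 by lia.
split; last first.
  rewrite card_prod !card_ord expnS expn1.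
  have -> : g * g = (g * (g %/ 2)) * 2 by nia.
  by rewrite mulnK.
split.
- split.
  + move=> x y; rewrite !Hedge_E; lia.
  + move=> x; rewrite Hedge_E; have := vI_lt x => H; rewrite !modS2; lia.
  + move=> x; rewrite Harc_E; have := vI_lt x => H; rewrite !modS2; lia.
  + move=> x y; rewrite Harc_E Hedge_E; have := vI_lt x; have := vI_lt y => H1 H2.
    rewrite !modS2; lia.
- move=> u; have := vI_lt u; have := vJ_lt u => hu1 hu2.
  case: (ltnP (vJ u).+1 (g %/ 2)) => hj.
    rewrite (_ : [set v | Harc g u v] = [set mkV (vI_lt u) hj]) ?cards1 //.
    apply/setP => x; rewrite !inE Harc_E eqV_E ?vI_mkV ?vJ_mkV /=.
    have := vI_lt x; have := vJ_lt x => hx1 hx2; rewrite !modS2; lia.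
  rewrite (_ : [set v | Harc g u v] = [set mkV (ltn_pmod (vI u + g %/ 2) g0) h0]) ?cards1 //.
  apply/setP => x; rewrite !inE Harc_E eqV_E ?vI_mkV ?vJ_mkV /=.
  have := vI_lt x; have := vJ_lt x => hx1 hx2; rewrite !modS2; lia.
- move=> u; have := vI_lt u; have := vJ_lt u => hu1 hu2.
  case: (posnP (vJ u)) => hj.
    rewrite (_ : [set v | Harc g v u] = [set mkV (ltn_pmod (vI u + g %/ 2) g0) h1]) ?cards1 //.
    apply/setP => x; rewrite !inE Harc_E eqV_E ?vI_mkV ?vJ_mkV /=.
    have := vI_lt x; have := vJ_lt x => hx1 hx2; rewrite !modS2; lia.
  have hj' : (vJ u).-1 < g %/ 2 by lia.
  rewrite (_ : [set v | Harc g v u] = [set mkV (vI_lt u) hj']) ?cards1 //.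
  apply/setP => x; rewrite !inE Harc_E eqV_E ?vI_mkV ?vJ_mkV /=.
  have := vI_lt x; have := vJ_lt x => hx1 hx2; rewrite !modS2; lia.
- move=> u; have := vI_lt u; have := vJ_lt u => hu1 hu2.
  rewrite (_ : [set v | Hedge g u v] = [set mkV (ltn_pmod (vI u + 1) g0) hu1;
                                          mkV (ltn_pmod (vI u + g - 1) g0) hu1]).
    rewrite cards2 eqV_E ?vI_mkV ?vJ_mkV /= !modS2; lia.
  apply/setP => x; rewrite !inE Hedge_E !eqV_E ?vI_mkV ?vJ_mkV /=.
  have := vI_lt x; have := vJ_lt x => hx1 hx2; rewrite !modS2; lia.
- split; last by move=> k v b; apply: girth_lb.
  exists (fun t => mkV (ltn_pmod t g0) h0), (fun _ => true).
  split => //.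
  + move=> i j ig jg /(congr1 vI); rewrite !vI_mkV; rewrite !modn_small //.
  + move=> i ig; rewrite /step Hedge_E ?vI_mkV ?vJ_mkV /= modn_mod (modn_small ig) !modS2; lia.
  + move=> i j ig jg ij _ /=; apply/negP => /eqP E.
    have := set21 (mkV (ltn_pmod i g0) h0) (mkV (ltn_pmod (i.+1 %% g) g0) h0).
    rewrite E in_set2 !eqV_E ?vI_mkV ?vJ_mkV /= !modn_mod (modn_small ig) (modn_small jg) => H1.
    have := set21 (mkV (ltn_pmod j g0) h0) (mkV (ltn_pmod (j.+1 %% g) g0) h0).
    rewrite -E in_set2 !eqV_E ?vI_mkV ?vJ_mkV /= !modn_mod (modn_small ig) (modn_small jg) => H2.
    rewrite !modS2 in H1 H2; lia.
Qed.
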